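(* If a finite group $G$ is a $Q\sigma T$-group, then every quotient $G/N$ of $G$ by a normal subgroup $N$ is also a $Q\sigma T$-group.
   Context: $\sigma=\{\sigma_i\mid i\in I\}$ is a partition of the set of all primes. A group is $\sigma$-primary if it is a $\sigma_i$-group for some $i$. $A_G$ is the core of $A$ in $G$. $A$ is $\sigma$-subnormal in $G$ if there is a chain $A=A_0\le\cdots\le A_n=G$ with, for each $i$, $A_{i-1}\trianglelefteq A_i$ or $A_i/(A_{i-1})_{A_i}$ $\sigma$-primary. $A$ is modular in $G$ if (1) $\langle X, A\cap Z\rangle=\langle X,A\rangle\cap Z$ for all $X\le Z\le G$, and (2) $\langle A, Y\cap Z\rangle=\langle A,Y\rangle\cap Z$ for all $Y,Z\le G$ with $A\le Z$. $A$ is $\sigma$-quasinormal in $G$ if it is $\sigma$-subnormal and modular. $G$ is a $Q\sigma T$-group if whenever $H$ is $\sigma$-quasinormal in $K$ and $K$ is $\sigma$-quasinormal in $G$, $H$ is $\sigma$-quasinormal in $G$. *)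

(* Defs.v *)
From mathcomp Require Import all_boot all_fingroup.
Set Implicit Arguments. Unset Strict Implicit. Unset Printing Implicit Defensive.
Local Open Scope group_scope.

(* A partition sigma = {sigma_i | i in I} of the primes is encoded by the map
   s : nat -> I sending a prime p to the index i of the block sigma_i with
   p \in sigma_i (values of s on non-primes are irrelevant). *)

Definition sigma_primary_nat (I : Type) (s : nat -> I) (n : nat) : Prop :=
  exists i : I, forall p, p \in primes n -> s p = i.

Definition sigma_step (I : Type) (s : nat -> I) (gT : finGroupType)
    (A B : {group gT}) : Prop :=
  A \subset B /\
  (A <| B \/ sigma_primary_nat s #|B / gcore A B|).

Inductive sigma_subnormal (I : Type) (s : nat -> I) (gT : finGroupType)
    : {group gT} -> {group gT} -> Prop :=
  | ssn_refl (G : {group gT}) : sigma_subnormal s G G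
  | ssn_step (A B G : {group gT}) :
      sigma_step s A B -> sigma_subnormal s B G -> sigma_subnormal s A G.

Definition modular (gT : finGroupType) (A G : {group gT}) : Prop :=
  A \subset G /\
  (forall X Z : {group gT}, X \subset Z -> Z \subset G ->
     X <*> (A :&: Z) = (X <*> A) :&: Z) /\
  (forall Y Z : {group gT}, Y \subset G -> Z \subset G -> A \subset Z ->
     A <*> (Y :&: Z) = (A <*> Y) :&: Z).

Definition sigma_quasinormal (I : Type) (s : nat -> I) (gT : finGroupType)
    (A G : {group gT}) : Prop :=
  sigma_subnormal s A G /\ modular A G.

Definition QsigmaT (I : Type) (s : nat -> I) (gT : finGroupType)
    (G : {group gT}) : Prop :=
  forall H K : {group gT},
    sigma_quasinormal s H K -> sigma_quasinormal s K G ->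
    sigma_quasinormal s H G.

(* Main.v *)
Require Import Defs.
From mathcomp Require Import all_boot all_fingroup.
Local Open Scope group_scope.

Set Implicit Arguments. Unset Strict Implicit.

Lemma sp_dvd (I : Type) (s : nat -> I) n m :
  sigma_primary_nat s n -> 0 < n -> m %| n -> sigma_primary_nat s m.
Proof.
move=> [i Hi] n0 mn; exists i => p; rewrite mem_primes => /and3P[pp m0 pm].
by apply: Hi; rewrite mem_primes pp n0 (dvdn_trans pm mn).
Qed.

Lemma core_dvd (T : finGroupType) (A B C : {group T}) :
  C \subset A -> B \subset 'N(C) -> #|B / gcore A B| %| #|B / C|.
Proof.
move=> sCA nCB; rewrite !card_quotient ?gcore_norm //.
by apply: indexgS; apply: gcore_max.
Qed.

Section S.
Variables (I : Type) (s : nat -> I) (gT : finGroupType) (N : {group gT}).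

Lemma step_pre (A B : {group coset_of N}) :
  sigma_step s A B ->
  sigma_step s (coset N @*^-1 A)%G (coset N @*^-1 B)%G.
Proof.
case=> sAB [nAB | spB]; split; first exact: morphpreS.
- by left; rewrite cosetpre_normal.
- exact: morphpreS.
- right; set C := gcore A B.
  apply: (sp_dvd spB); first exact: cardG_gt0.
  apply: dvdn_trans (core_dvd (C := (coset N @*^-1 C)%G) _ _) _.
  + by apply: morphpreS; apply: gcore_sub.
  + by apply: morphpre_norms; apply: gcore_norm.
  + rewrite card_quotient; last by apply: morphpre_norms; apply: gcore_norm.
    rewrite index_morphpre; last exact: sub_im_coset.
    by rewrite card_quotient ?gcore_norm.
Qed.

Lemma step_im (A B : {group gT}) : B \subset 'N(N) ->
  sigma_step s A B -> sigma_step s (A / N)%G (B / N)%G.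
Proof.
move=> nB [sAB [nAB | spB]]; split; first exact: quotientS.
- by left; apply: quotient_normal.
- exact: quotientS.
- right; set C := gcore A B.
  apply: (sp_dvd spB); first exact: cardG_gt0.
  apply: dvdn_trans (core_dvd (C := (C / N)%G) _ _) _.
  + by apply: quotientS; apply: gcore_sub.
  + by apply: quotient_norms; apply: gcore_norm.
  + rewrite card_quotient; last by apply: quotient_norms; apply: gcore_norm.
    rewrite card_quotient ?gcore_norm //.
    apply: index_morphim.
    by rewrite /= subIset // nB.
Qed.

Lemma ssn_sub (T : finGroupType) (A G : {group T}) :
  sigma_subnormal s A G -> A \subset G.
Proof.
elim=> [G0 | A0 B0 G0 [sAB _] _ IH]; first exact: subxx.
exact: subset_trans sAB IH.
Qed.

Lemma ssn_pre (A G : {group coset_of N}) :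
  sigma_subnormal s A G ->
  sigma_subnormal s (coset N @*^-1 A)%G (coset N @*^-1 G)%G.
Proof.
elim=> [G0 | A0 B0 G0 st _ IH]; first exact: ssn_refl.
exact: ssn_step (step_pre st) IH.
Qed.

Lemma ssn_im (A G : {group gT}) : G \subset 'N(N) ->
  sigma_subnormal s A G -> sigma_subnormal s (A / N)%G (G / N)%G.
Proof.
move=> nG ssn; move: ssn nG.
elim=> [G0 | A0 B0 G0 st ssnBG IH] nG; first exact: ssn_refl.
exact: ssn_step (step_im (subset_trans (ssn_sub ssnBG) nG) st) (IH nG).
Qed.


Lemma qinj (U V : {group gT}) : N \subset U -> U \subset 'N(N) ->
  N \subset V -> V \subset 'N(N) -> U / N = V / N -> U :=: V.
Proof.
move=> sU nU sV nV e.
have nrU : N <| U by rewrite /normal sU nU.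
have nrV : N <| V by rewrite /normal sV nV.
by rewrite -(quotientGK nrU) -(quotientGK nrV) e.
Qed.

Lemma mod_pre (A B : {group coset_of N}) :
  modular A B -> modular (coset N @*^-1 A)%G (coset N @*^-1 B)%G.
Proof.
case=> sAB [M1 M2]; split; first exact: morphpreS.
have nN (X : {set gT}) : X \subset coset N @*^-1 B -> X \subset 'N(N).
  by move=> sX; apply: subset_trans sX (morphpre_sub _ _).
have sNA : N \subset coset N @*^-1 A by apply: sub_cosetpre.
split.
- move=> X Z sXZ sZB; apply/eqP; rewrite eqEsubset; apply/andP; split.
    rewrite subsetI !join_subG joing_subl sXZ subsetIr /=.
    by rewrite (subset_trans (subsetIl _ _) (joing_subr _ _)).
  set W := (X <*> (coset N @*^-1 A :&: Z))%G.
  set S := (X <*> coset N @*^-1 A) :&: Z.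
  have nX : X \subset 'N(N) by apply: nN; apply: subset_trans sZB.
  have nA : coset N @*^-1 A \subset 'N(N) by apply: morphpre_sub.
  have sWZ : W \subset Z.
    by rewrite /= join_subG sXZ subsetIr.
  have e : S / N = W / N.
    rewrite /S quotientGI; last exact: subset_trans sNA (joing_subr _ _).
    rewrite quotientY // cosetpreK /= quotientY //; last first.
      by apply: subset_trans (subsetIl _ _) nA.
    rewrite quotientGI // cosetpreK.
    rewrite (M1 (X / N)%G (Z / N)%G) ?quotientS //.
    by rewrite -(cosetpreK B) quotientS.
  have nS : S \subset 'N(N).
    by apply: subset_trans (subsetIl _ _) _; rewrite join_subG nX nA.
  have nW : W \subset 'N(N).
    by rewrite /= join_subG nX (subset_trans (subsetIl _ _) nA).
  have h1 : S \subset N * W.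
    rewrite -quotientK // -e quotientK //; exact: mulG_subr.
  have h2 : S \subset (Z :&: N) * W.
    by rewrite group_modr // subsetI subsetIr h1.
  apply: subset_trans h2 _; apply: mul_subG => //.
  apply: subset_trans (joing_subr _ _); rewrite /= subsetI subsetIl andbT.
  by apply: subset_trans (subsetIr _ _) sNA.
- move=> Y Z sYB sZB sAZ.
  have nA : coset N @*^-1 A \subset 'N(N) by apply: morphpre_sub.
  have nY : Y \subset 'N(N) by apply: nN.
  have nZ : Z \subset 'N(N) by apply: nN.
  have sNZ : N \subset Z by apply: subset_trans sAZ.
  apply: (qinj (U := (coset N @*^-1 A <*> (Y :&: Z))%G)
               (V := ((coset N @*^-1 A <*> Y) :&: Z)%G)) => /=.
  + exact: subset_trans sNA (joing_subl _ _).
  + by rewrite join_subG nA (subset_trans (subsetIl _ _) nY).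
  + by rewrite subsetI sNZ (subset_trans sNA (joing_subl _ _)).
  + by apply: subset_trans (subsetIr _ _) nZ.
  rewrite quotientY //; last exact: subset_trans (subsetIl _ _) nY.
  rewrite quotientIG // quotientIG // quotientY // cosetpreK.
  rewrite (M2 (Y / N)%G (Z / N)%G) //.
  + by rewrite -(cosetpreK B) quotientS.
  + by rewrite -(cosetpreK B) quotientS.
  + by rewrite -(cosetpreK A) quotientS.
Qed.

Lemma mod_im (A G : {group gT}) : N \subset A -> N <| G ->
  modular A G -> modular (A / N)%G (G / N)%G.
Proof.
move=> sNA nNG [sAG [M1 M2]]; split; first exact: quotientS.
have nG := normal_norm nNG.
have nA : A \subset 'N(N) by apply: subset_trans sAG nG.
have preG : coset N @*^-1 (G / N) = G by apply: quotientGK.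
split.
- move=> X Z sXZ sZG.
  have sX'Z' := morphpreS (coset N) sXZ.
  have sZ'G : coset N @*^-1 Z \subset G.
    by rewrite -preG; apply: morphpreS.
  have := congr1 (fun S => S / N)
    (M1 (coset N @*^-1 X)%G (coset N @*^-1 Z)%G sX'Z' sZ'G).
  have nX : coset N @*^-1 X \subset 'N(N) by apply: morphpre_sub.
  rewrite /= quotientY //; last exact: subset_trans (subsetIl _ _) nA.
  rewrite quotientGI // quotientIG ?sub_cosetpre // quotientY //.
  by rewrite !cosetpreK.
- move=> Y Z sYG sZG sAZ.
  have sY'G : coset N @*^-1 Y \subset G by rewrite -preG; apply: morphpreS.
  have sZ'G : coset N @*^-1 Z \subset G by rewrite -preG; apply: morphpreS.
  have sAZ' : A \subset coset N @*^-1 Z.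
    have nrA : N <| A by rewrite /normal sNA nA.
    by rewrite -(quotientGK nrA); apply: morphpreS.
  have := congr1 (fun S => S / N)
    (M2 (coset N @*^-1 Y)%G (coset N @*^-1 Z)%G sY'G sZ'G sAZ').
  have nY : coset N @*^-1 Y \subset 'N(N) by apply: morphpre_sub.
  rewrite /= quotientY //; last first.
    by apply: subset_trans (subsetIl _ _) (morphpre_sub _ _).
  rewrite quotientIG ?sub_cosetpre // quotientIG ?sub_cosetpre //.
  by rewrite quotientY // !cosetpreK.
Qed.

End S.

Theorem lemma2p4 (I : Type) (s : nat -> I) (gT : finGroupType)
    (G N : {group gT}) :
  N <| G -> QsigmaT s G -> QsigmaT s (G / N)%G.
Proof.
move=> nNG QG H K [ssnHK modHK] [ssnKG modKG].
have eG : (coset N @*^-1 (G / N))%G = G by apply: val_inj; apply: quotientGK.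
have h1 := ssn_pre ssnKG; rewrite eG in h1.
have h2 := mod_pre modKG; rewrite eG in h2.
have [ssnH modH] := QG _ _ (conj (ssn_pre ssnHK) (mod_pre modHK)) (conj h1 h2).
have eH : ((coset N @*^-1 H) / N)%G = H by apply: val_inj; apply: cosetpreK.
split; rewrite -eH.
- exact: ssn_im (normal_norm nNG) ssnH.
- exact: mod_im (sub_cosetpre H) nNG modH.
Qed.
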